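(* For any $f,g\in L^\infty(\rho_X)$, \[|\mathcal R(\operatorname{sign} f)-\mathcal R(\operatorname{sign} g)|\le\mathbb P_{X\sim\rho_X}\big(\|f-g\|_{L^\infty(\rho_X)}\ge|f(X)|\big).\]
   Context: $\mathcal X=[0,1]^d$, $\rho$ is a probability distribution on $\mathcal X\times\{-1,1\}$ with $X$-marginal $\rho_X$, $(X,Y)\sim\rho$. $\operatorname{sign}(t)=1$ for $t>0$, $-1$ for $t<0$, $0$ for $t=0$, and $\operatorname{sign} f=\operatorname{sign}\circ f$. For a measurable $c$ on $\mathcal X$, $\mathcal R(c)=\mathbb P(c(X)\ne Y)$. *)

(* Defs.v *)
From HB Require Import structures.
From mathcomp Require Import all_boot all_order all_algebra.
From mathcomp Require Import all_classical all_reals all_analysis.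
Set Implicit Arguments. Unset Strict Implicit. Unset Printing Implicit Defensive.
Import Order.TTheory GRing.Theory Num.Theory.
Import numFieldNormedType.Exports.
Local Open Scope classical_set_scope.
Local Open Scope ring_scope.

(* The ambient space R^d is modelled as d.-tuple R with the product
   (= Borel) sigma-algebra; X = [0,1]^d is the subset below. *)
Definition cube (R : realType) (d : nat) : set (d.-tuple R) :=
  [set x | forall i : 'I_d, 0 <= tnth x i <= 1].

Definition lab (R : realType) (b : bool) : R := if b then 1 else -1.

Definition sign (R : realType) (t : R) : R := Num.sg t.

Definition risk (R : realType) (d : nat)
  (rho : probability (d.-tuple R * bool)%type R) (c : d.-tuple R -> R) : \bar R :=
  rho [set z | c z.1 <> lab R z.2].

Definition Linfty (R : realType) (d : nat)
  (mu : {measure set (d.-tuple R) -> \bar R}) (f : d.-tuple R -> R) : Prop :=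
  measurable_fun [set: d.-tuple R] f /\ (Lnorm mu +oo%E (EFin \o f) < +oo)%E.
Arguments cube R d : clear implicits.
Arguments lab R b : clear implicits.
Arguments sign R t : clear implicits.

(* Main.v *)
Require Import Defs.
From HB Require Import structures.
From mathcomp Require Import all_boot all_order all_algebra.
From mathcomp Require Import all_classical all_reals all_analysis.
Import Order.TTheory GRing.Theory Num.Theory.
Import numFieldNormedType.Exports.
Local Open Scope classical_set_scope.
Local Open Scope ring_scope.
From mathcomp Require Import ring lra ess_sup_inf measurable_realfun.

Lemma realaux (R : realType) (x a b c : R) : 0 <= a -> 0 <= b -> a <= c -> b <= c ->
  `|x + a - (x + b)| <= c.
Proof.
move=> *; rewrite (_ : _ - _ = a - b); last by ring.
rewrite ler_norml; apply/andP; split; lra.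
Qed.

Lemma diff_bound d (T : measurableType d) (R : realType) (mu : probability T R)
  (A B C : set T) : measurable A -> measurable B -> measurable C ->
  A `\` C = B `\` C -> (`| mu A - mu B | <= mu C)%E.
Proof.
move=> mA mB mC hD.
rewrite (measureDI mu mA mC) (measureDI mu mB mC) hD.
have fin : forall X, measurable X -> mu X \is a fin_num.
  by move=> X mX; exact: fin_num_measure.
have mAC : measurable (A `&` C) by exact: measurableI.
have mBC : measurable (B `&` C) by exact: measurableI.
have mBD : measurable (B `\` C) by exact: measurableD.
have key : (`| (fine (mu (B `\` C)) + fine (mu (A `&` C))) - (fine (mu (B `\` C)) + fine (mu (B `&` C)))|%:E <= (fine (mu C))%:E)%E.
  rewrite lee_fin; apply: realaux.
  - by apply: fine_ge0; exact: measure_ge0.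
  - by apply: fine_ge0; exact: measure_ge0.
  - by apply: fine_le; rewrite ?fin//; exact: measureIr.
  - by apply: fine_le; rewrite ?fin//; exact: measureIr.
by rewrite -abse_EFin EFinB !EFinD !fineK ?fin in key.
Qed.

Lemma sg_close (R : realType) (a b : R) : `|a - b| < `|a| -> Num.sg a = Num.sg b.
Proof.
move=> h.
case: (ltrgtP a 0) => ha; case: (ltrgtP b 0) => hb;
  rewrite ?(gtr0_sg ha) ?(ltr0_sg ha) ?(gtr0_sg hb) ?(ltr0_sg hb) ?ha ?hb ?sgr0 //;
  move: h; rewrite ?ha ?hb ?(gtr0_norm ha) ?(ltr0_norm ha) ?normr0 ltr_norml => /andP[h1 h2]; lra.
Qed.

Lemma sg_ne_lab (R : realType) (t : R) (b : bool) :
  (Num.sg t <> lab R b) <-> (if b then t <= 0 else 0 <= t).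
Proof.
rewrite /lab; case: b; case: (ltrgtP t 0) => ht;
  rewrite ?(gtr0_sg ht) ?(ltr0_sg ht) ?ht ?sgr0 ?lexx; split => //= h;
  try (exfalso; apply: h; lra); try (by move/eqP: h; lra);
  try (by move=> e; move: e h => /eqP; lra);
  try (by move=> /eqP; lra).
Qed.

Lemma meas_le0 d (T : measurableType d) (R : realType) (f : T -> R) :
  measurable_fun setT f -> measurable [set x | f x <= 0].
Proof.
move=> mf; have := mf measurableT _ (@measurable_itv R `]-oo, 0]).
rewrite setTI; congr measurable; apply/seteqP; split => x /=; by rewrite in_itv.
Qed.

Lemma meas_ge0 d (T : measurableType d) (R : realType) (f : T -> R) :
  measurable_fun setT f -> measurable [set x | 0 <= f x].
Proof.
move=> mf; have := mf measurableT _ (@measurable_itv R `[0, +oo[).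
rewrite setTI; congr measurable; apply/seteqP; split => x /=; by rewrite in_itv /= andbT.
Qed.

Lemma meas_err (R : realType) (d : nat) (f : d.-tuple R -> R) :
  measurable_fun setT f ->
  measurable [set z : (d.-tuple R * bool)%type | sign R (f z.1) <> lab R z.2].
Proof.
move=> mf.
have -> : [set z : (d.-tuple R * bool)%type | sign R (f z.1) <> lab R z.2] =
  ([set x | f x <= 0] `*` [set true]) `|` ([set x | 0 <= f x] `*` [set false]).
  apply/seteqP; split => -[x b] /=; rewrite /sign.
    by move/sg_ne_lab; case: b => h; [left|right].
  by move=> [[h e]|[h e]]; rewrite /= in e; subst b; apply/sg_ne_lab.
apply: measurableU; apply: measurableX => //.
- exact: meas_le0.
- exact: meas_ge0.
Qed.

Theorem lemma6 (R : realType) (d : nat)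
  (rho : probability (d.-tuple R * bool)%type R)
  (rhoX : probability (d.-tuple R) R)
  (hsupp : rho (cube R d `*` setT) = 1%E)
  (hmarg : forall A : set (d.-tuple R), measurable A ->
     rhoX A = rho (A `*` setT))
  (f g : d.-tuple R -> R)
  (hf : Linfty rhoX f) (hg : Linfty rhoX g) :
  (`| risk rho (sign R \o f) - risk rho (sign R \o g) |
     <= rhoX [set x | Lnorm rhoX +oo%E (fun x => (f x - g x)%:E) >= `| f x |%:E])%E.
Proof.
case: hf => mf _; case: hg => mg _.
set M := Lnorm rhoX +oo%E (fun x => (f x - g x)%:E).
have [N [mN N0 HN]] : exists N, [/\ measurable N, rhoX N = 0%E &
    forall x, ~ N x -> (`|f x - g x|%:E <= M)%E].
  have := ess_sup_ge rhoX (abse \o (fun x => (f x - g x)%:E)).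
  move=> [N [mN N0 sN]]; exists N; split => // x nx.
  rewrite /M unlock /= probability_setT lte01.
  apply: contrapT => hx; apply: nx; apply: sN => /=.
  exact: hx.
set B := [set x | (`|f x|%:E <= M)%E].
have mB : measurable B.
  have := @measurable_lee _ _ R setT measurableT (EFin \o (Num.norm \o f)) (cst M).
  rewrite setTI; apply.
    apply/measurable_EFinP; apply: measurableT_comp => //; exact: normr_measurable.
  exact: measurable_cst.
have mBN : measurable (B `|` N) by exact: measurableU.
apply: (@le_trans _ _ (rho ((B `|` N) `*` setT))).
  apply: diff_bound.
  - exact: meas_err.
  - exact: meas_err.
  - exact: measurableX.
  apply/seteqP; split => -[x b] /= [h1 h2]; (split; last exact: h2);
  have [nB nN] : ~ B x /\ ~ N x by split => h; apply: h2; split => //; [left|right].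
  - have := HN x nN => hM.
    have hlt : (`|f x - g x| < `|f x|) by rewrite -lte_fin (le_lt_trans hM) // ltNge; apply/negP.
    by rewrite /sign -(@sg_close R _ _ hlt).
  - have := HN x nN => hM.
    have hlt : (`|f x - g x| < `|f x|) by rewrite -lte_fin (le_lt_trans hM) // ltNge; apply/negP.
    by rewrite /sign (@sg_close R _ _ hlt).
by rewrite -hmarg // measureU0.
Qed.
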